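(* In the semi-discrete heat setting described in the context, the map $\Lambda_h:\mathcal{W}_h\to\mathcal{F}(\mathring\Omega_h)$, $\varphi\mapsto u_\varphi(T)$, is Fréchet-differentiable at $0$.
   Context: Let $h>0$, integers $M,N\ge2$, grid $\Omega_h=\{(ih,jh):0\le i\le M,0\le j\le N\}$ with nodes indexed $(i,j)$, interior $\mathring\Omega_h=\{1\le i\le M-1,1\le j\le N-1\}$, $\Gamma^1=\{(1,j):1\le j\le N-1\}$; $\mathcal{F}(\mathring\Omega_h)$ is the space of real functions on $\mathring\Omega_h$, extended by $0$ on boundary nodes. $\mathcal{W}_h$ is the set of perturbations $\varphi(t)=\sum_{j=1}^{N-1}h\lambda_j(t)V_j$ ($V_j$ the unit horizontal vector at boundary node $(0,j)$, zero elsewhere) with $\lambda_j\in L^\infty(\mathbb{R}^+)\cap C(\mathbb{R}^+)$, $\sup_j\|\lambda_j\|_\infty<1/2$. $A(\varphi)$ is the 5-point operator $[A(\varphi)\phi]_{(i,j)}=h^{-2}(4\phi_{(i,j)}-\phi_{(i+1,j)}-\phi_{(i-1,j)}-\phi_{(i,j+1)}-\phi_{(i,j-1)})$ off $\Gamma^1$, and $[A(\varphi)\phi]_{(1,j)}=h^{-2}\big(2(1+\frac{1}{1+\lambda_j(t)})\phi_{(1,j)}-\frac{2}{2+\lambda_j(t)}\phi_{(2,j)}-\phi_{(1,j+1)}-\phi_{(1,j-1)}\big)$. Given a source $F:[0,\infty)\to\mathcal{F}(\mathring\Omega_h)$ and $u_0\in\mathcal{F}(\mathring\Omega_h)$, $u_\varphi$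 solves $\partial_tu_\varphi+A(\varphi)u_\varphi=F$, $u_\varphi(0)=u_0$, and $T>0$ is fixed. *)

(* Defs.v *)
From HB Require Import structures.
From mathcomp Require Import all_boot all_order all_algebra.
From mathcomp Require Import all_classical all_reals all_analysis.
Set Implicit Arguments. Unset Strict Implicit. Unset Printing Implicit Defensive.
Import Order.TTheory GRing.Theory Num.Theory.
Import numFieldNormedType.Exports.
Local Open Scope classical_set_scope.
Local Open Scope ring_scope.

Definition cont_on_Rplus {R : realType} (f : R -> R) : Prop :=
  {within `[0 : R, +oo[%classic, continuous f}.

(* Grid functions are represented as  nat -> nat -> R  (node (i,j));
   only interior nodes 1 <= i <= M-1, 1 <= j <= N-1 are meaningful. *)
Definition inner_node (M N i j : nat) : bool := (0 < i < M)%N && (0 < j < N)%N.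

(* Extension by 0 on boundary nodes: the element of F(interior Omega_h). *)
Definition ext {R : realType} (M N : nat) (v : nat -> nat -> R) (i j : nat) : R :=
  if inner_node M N i j then v i j else 0.

(* A perturbation phi = sum_j h lambda_j V_j is encoded by its coefficients
   lam : nat -> R -> R, lam j = lambda_j for 1 <= j <= N-1 (other indices
   are irrelevant). *)

Definition Aop {R : realType} (h : R) (M N : nat) (lam : nat -> R -> R) (t : R)
  (v : nat -> nat -> R) (i j : nat) : R :=
  let w := ext M N v in
  if i == 1%N then
    h ^- 2 * (2 * (1 + (1 + lam j t)^-1) * w 1%N j
              - 2 / (2 + lam j t) * w 2%N j - w 1%N j.+1 - w 1%N j.-1)
  else
    h ^- 2 * (4 * w i j - w i.+1 j - w i.-1 j - w i j.+1 - w i j.-1).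

Definition admissible {R : realType} (N : nat) (lam : nat -> R -> R) : Prop :=
  forall j, (0 < j < N)%N ->
    cont_on_Rplus (lam j) /\
    exists B : R, forall t, 0 <= t -> `|lam j t| <= B.

Definition lamnorm {R : realType} (N : nat) (lam : nat -> R -> R) : R :=
  sup [set r : R | exists j t, (0 < j < N)%N /\ 0 <= t /\ r = `|lam j t|].

Definition inWh {R : realType} (N : nat) (lam : nat -> R -> R) : Prop :=
  admissible N lam /\ lamnorm N lam < 2^-1.

Definition is_solution {R : realType} (h : R) (M N : nat)
  (F : R -> nat -> nat -> R) (u0 : nat -> nat -> R) (lam : nat -> R -> R)
  (u : R -> nat -> nat -> R) : Prop :=
  forall i j, inner_node M N i j ->
    u 0 i j = u0 i j /\
    cont_on_Rplus (fun s => u s i j) /\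
    forall t : R, 0 < t ->
      is_derive t (1 : R) (fun s : R => u s i j) (F t i j - Aop h M N lam t (u t) i j).

(* Frechet differentiability at phi = 0 of a map Lam : W_h -> F(interior),
   with the norm lamnorm on the perturbation space and the max-norm over
   interior nodes on F(interior Omega_h) (written componentwise). *)
Definition frechet_diff_at0 {R : realType} (M N : nat)
  (Lam : (nat -> R -> R) -> nat -> nat -> R) : Prop :=
  exists L : (nat -> R -> R) -> nat -> nat -> R,
    (forall (a b : R) x y, admissible N x -> admissible N y ->
       forall i j, inner_node M N i j ->
         L (fun k t => a * x k t + b * y k t) i j = a * L x i j + b * L y i j) /\
    (exists C : R, forall x, admissible N x ->
       forall i j, inner_node M N i j -> `|L x i j| <= C * lamnorm N x) /\
    (forall eps : R, 0 < eps -> exists delta : R, 0 < delta /\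
       forall x, inWh N x -> lamnorm N x < delta ->
         forall i j, inner_node M N i j ->
           `|Lam x i j - Lam (fun _ _ => 0) i j - L x i j| <= eps * lamnorm N x).

(* Main.v *)
Require Import Defs.
From HB Require Import structures.
From mathcomp Require Import all_boot all_order all_algebra.
From mathcomp Require Import all_classical all_reals all_analysis.
From mathcomp Require Import zify ring lra.
Import Order.TTheory GRing.Theory Num.Theory.
Import numFieldNormedType.Exports.
Local Open Scope classical_set_scope.
Local Open Scope ring_scope.

Section Energy.
Variables (R : realType) (h : R) (M N : nat).
Local Notation grid := (nat -> nat -> R).

Definition En (v : grid) : R := \sum_(i < M.+1) \sum_(j < N.+1) (ext M N v i j) ^+ 2.
Definition nn : R := (M.+1 * N.+1)%:R.

Lemma En_ge0 v : 0 <= En v.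
Proof. by apply: sumr_ge0 => i _; apply: sumr_ge0 => j _; exact: sqr_ge0. Qed.

Lemma le_sum_ord n (f : 'I_n -> R) (k : 'I_n) : (forall i, 0 <= f i) -> f k <= \sum_(i<n) f i.
Proof. by move=> f0; rewrite (bigD1 k) //= lerDl sumr_ge0. Qed.

Lemma ext_le_En v a b : (ext M N v a b) ^+ 2 <= En v.
Proof.
rewrite {1}/ext; case: ifP => inn; last by rewrite expr0n /= En_ge0.
move: (inn); rewrite /inner_node => /andP[/andP[_ aM] /andP[_ bN]].
have aM' : (a < M.+1)%N by lia. have bN' : (b < N.+1)%N by lia.
rewrite /En.
have P1 : forall i : 'I_M.+1, 0 <= \sum_(j < N.+1) ext M N v i j ^+ 2.
  by move=> i; apply: sumr_ge0 => j _; exact: sqr_ge0.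
have H1 := le_sum_ord _ (fun i : 'I_M.+1 => \sum_(j < N.+1) ext M N v i j ^+ 2) (Ordinal aM') P1.
have H2 := le_sum_ord _ (fun j : 'I_N.+1 => ext M N v a j ^+ 2) (Ordinal bN') (fun j => sqr_ge0 _).
rewrite /= in H1 H2.
apply: le_trans H1; apply: le_trans H2.
by rewrite /= /ext inn.
Qed.

Lemma sum2_le (f : nat -> nat -> R) c : (forall i j, f i j <= c) ->
  \sum_(i < M.+1) \sum_(j < N.+1) f i j <= nn * c.
Proof.
move=> H; apply: le_trans (_ : \sum_(i < M.+1) \sum_(j < N.+1) c <= _).
  by apply: ler_sum => i _; apply: ler_sum => j _; exact: H.
by rewrite sumr_const card_ord sumr_const card_ord /nn mulr_natl -mulrnA mulnC.
Qed.

Lemma sum2_addC (f : nat -> nat -> R) C :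
  \sum_(i < M.+1) \sum_(j < N.+1) (f i j + C)
  = \sum_(i < M.+1) \sum_(j < N.+1) f i j + nn * C.
Proof.
under eq_bigr => i _ do rewrite big_split /= sumr_const card_ord.
by rewrite big_split /= sumr_const card_ord /nn mulr_natl -mulrnA mulnC.
Qed.

Lemma is_derive_sumf n (f : 'I_n -> R -> R) (df : 'I_n -> R) (t : R) :
  (forall i, is_derive t 1 (f i) (df i)) ->
  is_derive t 1 (fun s => \sum_(i < n) f i s) (\sum_(i < n) df i).
Proof.
move=> H; have -> : (fun s => \sum_(i < n) f i s) = \sum_(i < n) f i by rewrite fct_sumE.
exact: is_derive_sum.
Qed.

Lemma within_cont_sum n (A : set R) (f : 'I_n -> R -> R) :
  (forall i, {within A, continuous (f i)}) ->
  {within A, continuous (fun s => \sum_(i < n) f i s)}.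
Proof.
move=> H; have -> : (fun s => \sum_(i < n) f i s) = \sum_(i < n) f i by rewrite fct_sumE.
elim/big_ind: _ => //; first by move=> x; exact: cvg_cst.
by move=> f1 f2 c1 c2; exact: within_continuousD.
Qed.

Lemma En_derive (z : R -> grid) (dz : grid) (t : R) :
  (forall i j, inner_node M N i j -> is_derive t 1 (fun s => z s i j) (dz i j)) ->
  is_derive t 1 (fun s => En (z s))
    (\sum_(i < M.+1) \sum_(j < N.+1) (2 * ext M N (z t) i j * ext M N dz i j)).
Proof.
move=> H; rewrite /En; apply: is_derive_sumf => i; apply: is_derive_sumf => j.
rewrite /ext; have [inn|ninn] := boolP (inner_node M N i j).
- 
  have -> : (fun s => z s i j ^+ 2) = (fun s => z s i j) * (fun s => z s i j).
    by apply/funext => s; rewrite expr2.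
  apply: is_derive_eq; first exact: is_deriveM (H _ _ inn) (H _ _ inn).
  rewrite /GRing.scale /=. ring.
- 
  have -> : (fun s : R => (0:R) ^+ 2) = cst 0 by apply/funext => s; rewrite expr0n.
  by apply: is_derive_eq (is_derive_cst _ _ _) _; rewrite !mulr0.
Qed.

Lemma En_cont (z : R -> grid) :
  (forall i j, inner_node M N i j -> cont_on_Rplus (fun s => z s i j)) ->
  cont_on_Rplus (fun s => En (z s)).
Proof.
move=> H; rewrite /En /cont_on_Rplus; apply: within_cont_sum => i; apply: within_cont_sum => j.
rewrite /ext; have [inn|ninn] := boolP (inner_node M N i j).
- have -> : (fun s => z s i j ^+ 2) = (fun s => z s i j * z s i j) by apply/funext => s; rewrite expr2.
  move=> x; apply: cvgM; exact: (H _ _ inn).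
- move=> x; exact: cvg_cst.
Qed.

End Energy.
Section Gron.
Variable R : realType.

Lemma expR_neg_deriv (k t : R) :
  is_derive t 1 (fun s => expR (- (k * s))) (- k * expR (- (k*t))).
Proof.
have h1 : is_derive t 1 (fun s : R => - (k * s)) (- k).
  have := is_deriveZ k (is_derive_id t (1:R)).
  by move/is_deriveN; rewrite /GRing.scale /= mulr1.
have := @is_derive1_comp _ expR (fun s => - (k * s)) t _ _ (is_derive_expR _) h1.
by rewrite mulrC.
Qed.

Lemma gronwall (f df : R -> R) (k b T' : R) : 0 < k -> 0 <= b -> 0 <= T' ->
  cont_on_Rplus f ->
  (forall t, 0 < t -> t < T' -> is_derive t 1 f (df t)) ->
  (forall t, 0 < t -> t < T' -> df t <= k * f t + b) ->
  f T' <= (f 0 + b / k) * expR (k * T').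
Proof.
move=> k0 b0 T0 cf fd fle.
pose g := (f + cst (b / k)) * (fun s => expR (- (k * s))).
have gd : forall t, 0 < t -> t < T' -> is_derive t 1 g
   ((f t + b / k) *: (- k * expR (- (k*t))) + expR (- (k * t)) *: (df t + 0)).
  move=> t t0 tT; apply: is_deriveM; last exact: expR_neg_deriv.
  exact: is_deriveD (fd t t0 tT) (is_derive_cst (b/k) t 1).
have gc : {within `[0, T'], continuous g}.
  have sub : `[0, T'] `<=` `[0, +oo[.
    by move=> x /=; rewrite !in_itv /= => /andP[-> _].
  apply: (continuous_subspaceW sub).
  move=> x; apply: cvgM; first by apply: cvgD; [exact: cf | exact: cvg_cst].
  apply: continuous_subspaceT => y.
  apply: differentiable_continuous; apply/derivable1_diffP.
  by have [] := expR_neg_deriv k y.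
have H := @ler0_derive1_le_cc R g 0 T'.
have : g T' <= g 0.
  apply: H.
  - by move=> t; rewrite in_itv /= => /andP[t0 tT]; have [] := gd t t0 tT.
  - move=> t; rewrite in_itv /= => /andP[t0 tT].
    have dd := gd t t0 tT; rewrite derive1E derive_val /GRing.scale /=.
    have ep := expR_gt0 (- (k * t)).
    have := fle t t0 tT.
    have -> : (f t + b / k) * (- k * expR (- (k * t))) = - (k * f t + b) * expR (- (k * t)).
      by field; rewrite gt_eqF.
    nra.
  - exact: gc.
  - by rewrite in_itv /= lexx T0.
  - by rewrite in_itv /= lexx T0.
  - exact: T0.
change ((f T' + b / k) * expR (- (k * T')) <= (f 0 + b / k) * expR (- (k * 0)) -> f T' <= (f 0 + b / k) * expR (k * T')).
rewrite mulr0 oppr0 expR0 mulr1 expRN.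
have eT := expR_gt0 (k * T').
move=> H1.
have H2 : f T' + b / k <= (f 0 + b / k) * expR (k * T').
  by rewrite -ler_pdivrMr // .
have : 0 <= b / k by apply: divr_ge0 => //; exact: ltW.
lra.
Qed.

End Gron.
Section Geo.
Variable R : realType.
Definition w (n : nat) : R := (2 ^+ n)^-1.

Lemma w_gt0 n : 0 < w n. Proof. by rewrite /w invr_gt0 exprn_gt0. Qed.
Lemma wS n : w n.+1 = w n / 2.
Proof. by rewrite /w exprS invfM mulrC. Qed.
Lemma w0 : w 0 = 1. Proof. by rewrite /w expr0 invr1. Qed.
Lemma pw n : 2 ^+ n * w n = 1.
Proof. by rewrite /w mulfV // expf_neq0. Qed.

Lemma w_cvg : w n @[n --> \oo] --> (0:R).
Proof.
have -> : w = geometric 1 (2^-1).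
  by apply/funext => n; rewrite /w /geometric /= mul1r exprVn.
apply: cvg_geometric; rewrite ger0_norm ?invr_ge0 //; lra.
Qed.

Lemma geo_lim (a : nat -> R) (K : R) (n0 : nat) :
  (forall n, (n0 <= n)%N -> `|a n.+1 - a n| <= K * w n) ->
  forall n, (n0 <= n)%N -> `|limn a - a n| <= 2 * K * w n.
Proof.
move=> Ha.
pose b m := a (m + n0)%N - 2 * K * w (m + n0).
pose c m := a (m + n0)%N + 2 * K * w (m + n0).
have st : forall m, `|a (m.+1 + n0)%N - a (m + n0)%N| <= K * w (m + n0)
    /\ w (m.+1 + n0) = w (m + n0) / 2.
  by move=> m; rewrite addSn; split; [apply: Ha; exact: leq_addl | exact: wS].
have bS : forall m, b m <= b m.+1.
  move=> m; have [H1 H2] := st m; rewrite /b H2.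
  move: H1; rewrite ler_norml => /andP[H1 _]; lra.
have cS : forall m, c m.+1 <= c m.
  move=> m; have [H1 H2] := st m; rewrite /c H2.
  move: H1; rewrite ler_norml => /andP[_ H1]; lra.
have bc : forall m, b m <= c m.
  move=> m; have [H1 _] := st m; have Kw : 0 <= K * w (m + n0).
    by apply: le_trans (normr_ge0 _) H1.
  rewrite /b /c; lra.
have bnd : {homo b : n m / (n <= m)%N >-> n <= m} by apply/nondecreasing_seqP.
have cnd : forall m k, (m <= k)%N -> c k <= c m.
  move=> m k; elim: k => [|k IH]; first by rewrite leqn0 => /eqP ->.
  rewrite leq_eqVlt => /orP[/eqP -> //|]; rewrite ltnS => mk.
  exact: le_trans (cS k) (IH mk).
have bub : has_ubound (range b).
  by exists (c 0) => _ [m _ <-]; apply: le_trans (bc m) (cnd 0 m (leq0n m)).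
have bcv := nondecreasing_cvgn bnd bub.
set l := sup (range b) in bcv.
have acv : a n @[n --> \oo] --> l.
  rewrite -(cvg_shiftn n0).
  have -> : (fun n => a (n + n0)%N) = (fun n => b n + 2 * K * w (n + n0)).
    by apply/funext => n; rewrite /b; ring.
  rewrite -[l]addr0; apply: cvgD => //.
  rewrite -(mulr0 (2 * K)); apply: cvgMr.
  by rewrite (cvg_shiftn n0 w); exact: w_cvg.
have -> : limn a = l by exact: cvg_lim.
move=> n n0n; have -> : n = ((n - n0) + n0)%N by rewrite subnK.
set m := (n - n0)%N.
have l1 : b m <= l.
  have := nondecreasing_cvgn_le bnd (cvgP _ bcv) m.
  by rewrite (cvg_lim _ bcv).
have l2 : l <= c m.
  rewrite -(cvg_lim _ bcv) //; apply: limr_le; first exact: (cvgP _ bcv).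
  by exists m => // k /= mk; apply: le_trans (bc k) (cnd m k mk).
rewrite ler_norml; move: l1 l2; rewrite /b /c; lra.
Qed.

End Geo.
Section Pow.
Variable R : realType.
Lemma pow2_mono n m : (n <= m)%N -> (2:R) ^+ n <= 2 ^+ m.
Proof. by move=> nm; rewrite -!natrX ler_nat leq_pexp2l. Qed.
Lemma pow2_large (B : R) (N0 : nat) : exists n, (N0 <= n)%N /\ B < 2 ^+ n.
Proof.
have hB := archi_boundP (normr_ge0 B).
set k := Num.Def.archi_bound _ in hB.
exists (N0 + k)%N; split; first exact: leq_addr.
have : (k <= 2 ^ (N0 + k))%N.
  apply: leq_trans (ltnW (ltn_expl (N0 + k) (isT : (1 < 2)%N))); exact: leq_addl.
rewrite -(ler_nat R) natrX => H.
apply: le_lt_trans (ler_norm B) _; exact: lt_le_trans hB H.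
Qed.
End Pow.
Section Ener.
Variables (R : realType) (h : R) (M N : nat).
Local Notation grid := (nat -> nat -> R).
Local Notation En := (@En R M N).
Local Notation nn := (@nn R M N).

Definition K0 : R := 144 * (h^-2)^+2.
Definition kk : R := 1 + 2 * nn * K0.

Lemma nn_ge0 : 0 <= nn. Proof. by rewrite /nn ler0n. Qed.
Lemma K0_ge0 : 0 <= K0. Proof. by rewrite /K0 mulr_ge0 // sqr_ge0. Qed.
Lemma kk_ge1 : 1 <= kk.
Proof. by rewrite /kk lerDl mulr_ge0 ?K0_ge0 // mulr_ge0 ?nn_ge0. Qed.

Lemma inv_bnd (c : R) : 2^-1 <= c -> 0 < c^-1 /\ c^-1 <= 2.
Proof.
move=> hc; have c0 : 0 < c by lra.
have ci : 0 < c^-1 by rewrite invr_gt0.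
have e : c * c^-1 = 1 by rewrite mulfV // gt_eqF.
split => //; nra.
Qed.

Lemma ext_abs v a b : `|ext M N v a b| <= Num.sqrt (En v).
Proof. by rewrite -sqrtr_sqr; apply: ler_wsqrtr; exact: ext_le_En. Qed.

Lemma abs4 (a b c d : R) : `|a - b - c - d| <= `|a| + `|b| + `|c| + `|d|.
Proof.
have := ler_normB (a - b - c) d; have := ler_normB (a - b) c; have := ler_normB a b.
lra.
Qed.

Lemma abs_ce (c C e S : R) : 0 <= c -> c <= C -> `|e| <= S -> `|c * e| <= C * S.
Proof.
move=> c0 cC eS; rewrite normrM (ger0_norm c0).
by apply: ler_pM => //; exact: normr_ge0.
Qed.

Lemma Aop_abs (mu : nat -> R -> R) t w i j : 0 < h -> `|mu j t| <= 2^-1 ->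
  `|Aop h M N mu t w i j| <= 12 * h^-2 * Num.sqrt (En w).
Proof.
move=> h0 mub.
have hh : 0 < h^-2 by rewrite invr_gt0 exprn_gt0.
set S := Num.sqrt (En w).
have eb : forall a b, `|ext M N w a b| <= S by move=> a b; exact: ext_abs.
have S0 : 0 <= S by exact: sqrtr_ge0.
have -> : 12 * h^-2 * S = h^-2 * (12 * S) by ring.
rewrite /Aop /=; case: ifP => _; rewrite normrM (ger0_norm (ltW hh)) ler_pM2l //.
- move: mub; rewrite ler_norml => /andP[m1 m2].
  have [p0 p2] : 0 < (1 + mu j t)^-1 /\ (1 + mu j t)^-1 <= 2 by apply: inv_bnd; lra.
  have [q0 q2] : 0 < (2 + mu j t)^-1 /\ (2 + mu j t)^-1 <= 2 by apply: inv_bnd; lra.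
  apply: le_trans (abs4 _ _ _ _) _.
  have := @abs_ce (2 * (1 + (1 + mu j t)^-1)) 6 _ _ (_ : 0 <= _) (_ : _ <= 6) (eb 1%N j).
  have := @abs_ce (2 / (2 + mu j t)) 4 _ _ (_ : 0 <= _) (_ : _ <= 4) (eb 2%N j).
  have := eb 1%N j.+1; have := eb 1%N j.-1.
  move=> a b c d; apply: le_trans (_ : 6 * S + 4 * S + S + S <= _); last by lra.
  rewrite lerD // lerD // lerD //.
  + by apply: d; lra.
  + by apply: c; lra.
- apply: le_trans (_ : `|4 * ext M N w i j| + `|ext M N w i.+1 j| + `|ext M N w i.-1 j| + `|ext M N w i j.+1| + `|ext M N w i j.-1| <= _).
    set a := 4 * _; set b := ext M N w i.+1 j; set c := ext M N w i.-1 j.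
    set d := ext M N w i j.+1; set e := ext M N w i j.-1.
    have := ler_normB (a - b - c - d) e; have := abs4 a b c d; lra.
  have := @abs_ce 4 4 _ _ (_ : 0 <= 4) (lexx 4) (eb i j).
  have := eb i.+1 j; have := eb i.-1 j; have := eb i j.+1; have := eb i j.-1.
  move=> a b c d e; have e4 : (0:R) <= 4 by lra.
  have := e e4.
  lra.
Qed.

End Ener.
Section Ener2.
Variables (R : realType) (h : R) (M N : nat).
Local Notation grid := (nat -> nat -> R).
Local Notation En := (@En R M N).
Local Notation nn := (@nn R M N).
Local Notation K0 := (@K0 R h).
Local Notation kk := (@kk R h M N).

Lemma Aop_sq mu t w i j : 0 < h -> `|mu j t| <= 2^-1 ->
  (Aop h M N mu t w i j)^+2 <= K0 * En w.
Proof.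
move=> h0 mb; have := @Aop_abs R h M N mu t w i j h0 mb.
set A := Aop h M N mu t w i j; set S := Num.sqrt (En w) => HA.
have S0 : 0 <= S by exact: sqrtr_ge0.
have E0 := @En_ge0 R M N w.
rewrite /K0 -[En w](sqr_sqrtr E0) -/S -(real_normK (num_real A)).
have hh : 0 <= h^-2 by rewrite invr_ge0 exprn_ge0 // ltW.
have := normr_ge0 A; set a := `|A| in HA *.
have := mulr_ge0 (mulr_ge0 (_ : 0 <= 12) hh) S0.
nra.
Qed.

Lemma energy (z g : R -> grid) (mu : nat -> R -> R) (G T' : R) :
  0 < h -> (forall j t, (0 < j < N)%N -> 0 <= t -> `|mu j t| <= 2^-1) ->
  (forall i j, inner_node M N i j -> cont_on_Rplus (fun s => z s i j)) ->
  (forall i j, inner_node M N i j -> forall t : R, 0 < t ->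
      is_derive t 1 (fun s => z s i j) (g t i j - Aop h M N mu t (z t) i j)) ->
  0 <= T' -> 0 <= G ->
  (forall (t : R) i j, 0 < t -> t < T' -> inner_node M N i j -> (g t i j)^+2 <= G) ->
  En (z T') <= (En (z 0) + 2 * nn * G) * expR (kk * T').
Proof.
move=> h0 mub zc zd T0 G0 gb.
have k1 := @kk_ge1 R h M N.
have b0 : 0 <= 2 * nn * G by rewrite mulr_ge0 // mulr_ge0 // nn_ge0.
apply: le_trans (_ : (En (z 0) + 2 * nn * G / kk) * expR (kk * T') <= _); last first.
  apply: ler_wpM2r; first exact: expR_ge0.
  rewrite lerD2l ler_pdivrMr; last by lra.
  by rewrite ler_peMr //.
pose dz t := fun i j => g t i j - Aop h M N mu t (z t) i j.
apply: (@gronwall R (fun s => En (z s))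
  (fun t => \sum_(i < M.+1) \sum_(j < N.+1) (2 * ext M N (z t) i j * ext M N (dz t) i j))) => //.
- by lra.
- exact: En_cont.
- by move=> t t0 tT; apply: En_derive => i j inn; exact: zd.
move=> t t0 tT.
have C0 : forall i j, 2 * ext M N (z t) i j * ext M N (dz t) i j
     <= ext M N (z t) i j ^+ 2 + (2 * G + 2 * K0 * En (z t)).
  have KE := mulr_ge0 (@K0_ge0 R h) (@En_ge0 R M N (z t)).
  move=> i j; rewrite /ext; case: ifP => inn; last first.
    by rewrite mulr0 expr0n /=; lra.
  move: (inn); rewrite /inner_node => /andP[_ jN].
  have gg := gb t i j t0 tT inn.
  have aa := Aop_sq mu t (z t) i j h0 (mub j t jN (ltW t0)).
  rewrite /dz.
  set x := z t i j; set y := g t i j in gg *; set A := Aop h M N mu t (z t) i j in aa *.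
  have := sqr_ge0 (x - (y - A)); have := sqr_ge0 (y + A).
  lra.
apply: le_trans (_ : \sum_(i < M.+1) \sum_(j < N.+1)
   (ext M N (z t) i j ^+ 2 + (2 * G + 2 * K0 * En (z t))) <= _).
  by apply: ler_sum => i _; apply: ler_sum => j _; exact: C0.
rewrite (@sum2_addC R M N (fun a b => ext M N (z t) a b ^+ 2)) -/(En (z t)) /kk.
lra.
Qed.

End Ener2.
Section Adm.
Variables (R : realType) (N : nat).
Hypothesis N2 : (2 <= N)%N.

Definition lc (a b : R) (x y : nat -> R -> R) : nat -> R -> R :=
  fun k t => a * x k t + b * y k t.

Definition bnd (x : nat -> R -> R) (r : R) : Prop :=
  forall j t, (0 < j < N)%N -> 0 <= t -> `|x j t| <= r.

Lemma fin_bound n (P : nat -> R -> Prop) :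
  (forall k B B', B <= B' -> P k B -> P k B') ->
  (forall k, (k < n)%N -> exists B, P k B) -> exists B, forall k, (k < n)%N -> P k B.
Proof.
move=> mono; elim: n => [|n IH] H; first by exists 0 => k; rewrite ltn0.
have [B1 HB1] := IH (fun k kn => H k (leqW kn)).
have [B2 HB2] := H n (ltnSn n).
exists (Num.max B1 B2) => k; rewrite ltnS leq_eqVlt => /orP[/eqP->|kn].
  by apply: mono HB2; rewrite le_max lexx orbT.
by apply: mono (HB1 k kn); rewrite le_max lexx.
Qed.

Lemma adm_bnd (x : nat -> R -> R) : admissible N x -> exists B, bnd x B.
Proof.
move=> ax.
pose P k B := (0 < k < N)%N -> forall t, 0 <= t -> `|x k t| <= B.
have mono : forall k B B', B <= B' -> P k B -> P k B'.
  by move=> k B B' BB' H kN t t0; apply: le_trans (H kN t t0) BB'.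
have ex : forall k, (k < N)%N -> exists B, P k B.
  move=> k kN; case: (boolP (0 < k)%N) => k0.
    have kN2 : (0 < k < N)%N by rewrite k0 kN.
    have [_ [B HB]] := ax k kN2.
    by exists B => _ t t0; exact: HB.
  by exists 0 => /andP[k0']; rewrite k0' in k0.
have [B HB] := @fin_bound N P mono ex.
by exists B => j t jN t0; exact: HB (andP jN).2 jN t t0.
Qed.

Definition Sx (x : nat -> R -> R) :=
  [set r : R | exists j t, (0 < j < N)%N /\ 0 <= t /\ r = `|x j t|].

Lemma Sx_ne x : Sx x !=set0.
Proof. by exists `|x 1%N 0|; exists 1%N, 0; split => //; apply/andP; split. Qed.

Lemma lamnorm_le x B : bnd x B -> lamnorm N x <= B.
Proof.
move=> HB; apply: ge_sup; first exact: Sx_ne.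
by move=> r [j [t [jN [t0 ->]]]]; exact: HB.
Qed.

Lemma lamnorm_ub (x : nat -> R -> R) : admissible N x -> bnd x (lamnorm N x).
Proof.
move=> ax j t jN t0; have [B HB] := adm_bnd x ax.
have hs : has_ubound (Sx x).
  by exists B => r [j' [t' [jN' [t0' ->]]]]; exact: HB.
by apply: (ub_le_sup hs); exists j, t.
Qed.

Lemma lamnorm_ge0 (x : nat -> R -> R) : admissible N x -> 0 <= lamnorm N x.
Proof.
move=> ax.
have H : `|x 1%N 0| <= lamnorm N x by apply: lamnorm_ub => //; apply/andP; split.
exact: le_trans (normr_ge0 _) H.
Qed.

Lemma adm_lc (a b : R) (x y : nat -> R -> R) : admissible N x -> admissible N y -> admissible N (lc a b x y).
Proof.
move=> ax ay k kN; have [cx _] := ax k kN; have [cy _] := ay k kN.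
split.
  move=> t; apply: cvgD; apply: cvgM; try exact: cvg_cst.
  - exact: cx.
  - exact: cy.
have [Bx HBx] := adm_bnd x ax; have [By HBy] := adm_bnd y ay.
exists (`|a| * Bx + `|b| * By) => t t0; rewrite /lc.
apply: le_trans (ler_normD _ _) _; rewrite !normrM.
by apply: lerD; apply: ler_wpM2l => //; [exact: HBx | exact: HBy].
Qed.

Lemma bnd_lc a b x y rx ry : bnd x rx -> bnd y ry -> bnd (lc a b x y) (`|a| * rx + `|b| * ry).
Proof.
move=> Hx Hy j t jN t0; rewrite /lc.
apply: le_trans (ler_normD _ _) _; rewrite !normrM.
by apply: lerD; apply: ler_wpM2l => //; [exact: Hx | exact: Hy].
Qed.

Lemma inWh_bnd (x : nat -> R -> R) : inWh N x -> bnd x (2^-1).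
Proof. by move=> [ax xl] j t jN t0; apply: le_trans (ltW xl); exact: lamnorm_ub. Qed.

End Adm.
Section Lin.
Variable R : realType.
Lemma is_derive_lin4 (f1 f2 f3 f4 : R -> R) (d1 d2 d3 d4 c1 c2 c3 c4 t : R) :
  is_derive t 1 f1 d1 -> is_derive t 1 f2 d2 -> is_derive t 1 f3 d3 -> is_derive t 1 f4 d4 ->
  is_derive t 1 (fun s => c1 * f1 s + c2 * f2 s + c3 * f3 s + c4 * f4 s)
     (c1 * d1 + c2 * d2 + c3 * d3 + c4 * d4).
Proof.
move=> H1 H2 H3 H4.
have H := is_deriveD (is_deriveD (is_deriveD (is_deriveZ c1 H1) (is_deriveZ c2 H2))
   (is_deriveZ c3 H3)) (is_deriveZ c4 H4).
have -> : (fun s => c1 * f1 s + c2 * f2 s + c3 * f3 s + c4 * f4 s)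
   = c1 \*: f1 + c2 \*: f2 + c3 \*: f3 + c4 \*: f4 by apply/funext => s.
exact: H.
Qed.

Lemma within_cont_lin4 (A : set R) (f1 f2 f3 f4 : R -> R) (c1 c2 c3 c4 : R) :
  {within A, continuous f1} -> {within A, continuous f2} ->
  {within A, continuous f3} -> {within A, continuous f4} ->
  {within A, continuous (fun s => c1 * f1 s + c2 * f2 s + c3 * f3 s + c4 * f4 s)}.
Proof.
move=> H1 H2 H3 H4 x.
apply: cvgD; [apply: cvgD; [apply: cvgD|]|]; apply: cvgM; try exact: cvg_cst.
- exact: H1. - exact: H2. - exact: H3. - exact: H4.
Qed.
End Lin.
Section Main.
Variables (R : realType) (h : R) (M N : nat) (T : R)
  (F : R -> nat -> nat -> R) (u0 : nat -> nat -> R)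
  (u : (nat -> R -> R) -> R -> nat -> nat -> R).
Hypotheses (h0 : 0 < h) (N2 : (2 <= N)%N) (T0 : 0 < T)
  (Fc : forall i j, inner_node M N i j -> cont_on_Rplus (fun t => F t i j))
  (usol : forall lam, inWh N lam -> is_solution h M N F u0 lam (u lam)).

Local Notation grid := (nat -> nat -> R).
Local Notation fn := (nat -> R -> R).
Local Notation En := (@En R M N).
Local Notation nn := (@nn R M N).
Local Notation kk := (@kk R h M N).
Local Notation bnd := (@bnd R N).
Local Notation lamnorm_le := (@lamnorm_le R N N2).
Local Notation lamnorm_ub := (@lamnorm_ub R N).
Local Notation lamnorm_ge0 := (@lamnorm_ge0 R N N2).
Local Notation inWh_bnd := (@inWh_bnd R N).
Local Notation adm_lc := (@adm_lc R N).
Local Notation bnd_lc := (@bnd_lc R N).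
Local Notation lc := (@lc R).

Definition z0 : fn := fun _ _ => 0.

Lemma inWh_z0 : inWh N z0.
Proof.
have b0 : bnd z0 0 by move=> j t _ _; rewrite normr0.
split.
  move=> k _; split; first by move=> x; exact: cvg_cst.
  by exists 0 => t _; rewrite /z0 normr0.
by apply: le_lt_trans (lamnorm_le _ _ b0) _; rewrite invr_gt0.
Qed.

Lemma En_eq (v w : grid) : (forall a b, inner_node M N a b -> v a b = w a b) -> En v = En w.
Proof.
move=> H; apply: eq_bigr => i _; apply: eq_bigr => j _.
by rewrite /ext; case: ifP => // inn; rewrite H.
Qed.

Lemma Phi_ex : exists Phi, 0 <= Phi /\ forall t, 0 <= t <= T -> En (F t) <= Phi.
Proof.
have c : {within `[0, T], continuous (fun t => En (F t))}.
  have sub : `[0, T] `<=` `[0, +oo[.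
    by move=> x /=; rewrite !in_itv /= => /andP[-> _].
  apply: (continuous_subspaceW sub); exact: En_cont.
have [t0 _ Ht] := EVT_max (ltW T0) c.
exists (En (F t0)); split; first exact: En_ge0.
by move=> t tT; apply: Ht; rewrite in_itv /=.
Qed.

Lemma U_ex : exists U, 0 <= U /\ forall lam, inWh N lam -> forall t, 0 <= t <= T ->
  forall a b, `|ext M N (u lam t) a b| <= U.
Proof.
have [Phi [P0 HP]] := Phi_ex.
pose B0 := (En u0 + 2 * nn * Phi) * expR (kk * T).
exists (Num.sqrt B0); split; first exact: sqrtr_ge0.
move=> lam lW t /andP[t0 tT] a b.
apply: le_trans (@ext_abs R M N _ a b) _; apply: ler_wsqrtr.
have sol := usol lam lW.
have := @energy R h M N (u lam) F lam Phi t h0 (inWh_bnd _ lW) _ _ t0 P0 _.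
have -> : En (u lam 0) = En u0 by apply: En_eq => a' b' inn; have [] := sol a' b' inn.
move=> H; apply: le_trans (H _ _ _) _.
- by move=> i j inn; have [_ []] := sol i j inn.
- by move=> i j inn; have [_ [_]] := sol i j inn.
- move=> s i j s0 st inn.
  have := @ext_le_En R M N (F s) i j; rewrite /ext inn => H1.
  by apply: le_trans H1 _; apply: HP; rewrite (ltW s0) (le_trans (ltW st) tT).
- apply: ler_wpM2l.
    by rewrite addr_ge0 ?En_ge0 // mulr_ge0 // mulr_ge0 // nn_ge0.
  rewrite ler_expR; apply: ler_wpM2l => //.
  by apply: le_trans (@kk_ge1 R h M N); rewrite ler01.
Qed.


Definition zc (c1 c2 c3 : R) (l1 l2 l3 : fn) : R -> grid :=
  fun s a b => c1 * u l1 s a b + c2 * u l2 s a b + c3 * u l3 s a b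
               + (- (c1 + c2 + c3)) * u z0 s a b.
Definition Dop (mu : fn) (t : R) (w : grid) i j :=
  Aop h M N mu t w i j - Aop h M N z0 t w i j.
Definition gcf (c1 c2 c3 : R) (l1 l2 l3 : fn) (t : R) i j :=
  - (c1 * Dop l1 t (u l1 t) i j + c2 * Dop l2 t (u l2 t) i j + c3 * Dop l3 t (u l3 t) i j).

Lemma Aop_lin4 mu t (w1 w2 w3 w4 : grid) (c1 c2 c3 c4 : R) i j :
  Aop h M N mu t (fun a b => c1 * w1 a b + c2 * w2 a b + c3 * w3 a b + c4 * w4 a b) i j
  = c1 * Aop h M N mu t w1 i j + c2 * Aop h M N mu t w2 i j
    + c3 * Aop h M N mu t w3 i j + c4 * Aop h M N mu t w4 i j.
Proof.
have E : forall a b, ext M N (fun a b => c1 * w1 a b + c2 * w2 a b + c3 * w3 a b + c4 * w4 a b) a b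
   = c1 * ext M N w1 a b + c2 * ext M N w2 a b + c3 * ext M N w3 a b + c4 * ext M N w4 a b.
  by move=> a b; rewrite /ext; case: ifP => _; ring.
by rewrite /Aop /= !E; case: ifP => _; ring.
Qed.

Definition C0 : R := Num.sqrt (2 * nn * expR (kk * T)).

Lemma C0_ge0 : 0 <= C0. Proof. exact: sqrtr_ge0. Qed.

Lemma comb_bound (c1 c2 c3 : R) (l1 l2 l3 : fn) (T' gb : R) :
  inWh N l1 -> inWh N l2 -> inWh N l3 -> 0 <= T' -> T' <= T -> 0 <= gb ->
  (forall t i j, 0 < t -> t < T' -> inner_node M N i j -> `|gcf c1 c2 c3 l1 l2 l3 t i j| <= gb) ->
  forall a b, inner_node M N a b -> `|zc c1 c2 c3 l1 l2 l3 T' a b| <= C0 * gb.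
Proof.
move=> W1 W2 W3 T'0 T'T gb0 Hg a b inn.
have s1 := usol l1 W1; have s2 := usol l2 W2; have s3 := usol l3 W3.
have s4 := usol z0 inWh_z0.
have mub : bnd z0 (2^-1) by move=> j t _ _; rewrite normr0 invr_ge0.
have G0 : 0 <= gb ^+ 2 by exact: sqr_ge0.
have := @energy R h M N (zc c1 c2 c3 l1 l2 l3) (gcf c1 c2 c3 l1 l2 l3) z0 (gb ^+ 2) T' h0 mub _ _ T'0 G0 _.
have -> : En (zc c1 c2 c3 l1 l2 l3 0) = En (fun _ _ => 0).
  apply: En_eq => a' b' inn'; rewrite /zc.
  have [-> _] := s1 _ _ inn'; have [-> _] := s2 _ _ inn'.
  have [-> _] := s3 _ _ inn'; have [-> _] := s4 _ _ inn'.
  ring.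
have -> : En (fun _ _ => 0) = 0.
  by rewrite /En; apply: big1 => i _; apply: big1 => j _; rewrite /ext; case: ifP; rewrite expr0n.
rewrite add0r => H.
have H1 : En (zc c1 c2 c3 l1 l2 l3 T') <= C0 ^+ 2 * gb ^+ 2.
  apply: le_trans (H _ _ _) _.
  - move=> i j inn'; rewrite /zc; apply: within_cont_lin4.
    + by have [_ []] := s1 i j inn'.
    + by have [_ []] := s2 i j inn'.
    + by have [_ []] := s3 i j inn'.
    + by have [_ []] := s4 i j inn'.
  - move=> i j inn' t t0.
    have [_ [_ d1]] := s1 i j inn'; have [_ [_ d2]] := s2 i j inn'.
    have [_ [_ d3]] := s3 i j inn'; have [_ [_ d4]] := s4 i j inn'.
    apply: is_derive_eq; first exact: is_derive_lin4 (d1 t t0) (d2 t t0) (d3 t t0) (d4 t t0).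
    rewrite /zc Aop_lin4 /gcf /Dop; ring.
  - move=> t i j t0 tT inn'.
    have := Hg t i j t0 tT inn'; set g := gcf _ _ _ _ _ _ _ _ _ => Hg'.
    rewrite -(real_normK (num_real g)).
    have := normr_ge0 g; nra.
  rewrite /C0 sqr_sqrtr; last first.
    by rewrite mulr_ge0 ?expR_ge0 // mulr_ge0 // nn_ge0.
  have e : expR (kk * T') <= expR (kk * T).
    rewrite ler_expR; apply: ler_wpM2l => //.
    by apply: le_trans (@kk_ge1 R h M N); rewrite ler01.
  have := mulr_ge0 (mulr_ge0 G0 (@nn_ge0 R M N)) (_ : 0 <= expR (kk * T) - expR (kk * T')).
  move=> /(_ _); rewrite subr_ge0 => /(_ e).
  lra.
have H2 := @ext_le_En R M N (zc c1 c2 c3 l1 l2 l3 T') a b.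
rewrite /ext inn in H2.
rewrite -sqrtr_sqr; apply: le_trans (ler_wsqrtr (le_trans H2 H1)) _.
rewrite sqrtrM ?sqr_ge0 // !sqrtr_sqr ger0_norm ?C0_ge0 // ger0_norm //.
Qed.


Definition cc (m : R) : R := 2 * (1 + m)^-1 - 2.
Definition dd (m : R) : R := 1 - 2 / (2 + m).

Lemma Dop_eq mu t w i j : Dop mu t w i j =
  if i == 1%N then h^-2 * (cc (mu j t) * ext M N w 1 j + dd (mu j t) * ext M N w 2 j) else 0.
Proof.
rewrite /Dop /Aop /z0 /=; case: ifP => _; last by rewrite subrr.
rewrite !addr0 invr1 divff; last by rewrite pnatr_eq0.
rewrite /cc /dd; ring.
Qed.

Lemma Dop_z0 t w i j : Dop z0 t w i j = 0.
Proof. by rewrite /Dop subrr. Qed.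

Lemma cc_dec m : `|m| <= 2^-1 -> exists P, `|P| <= 4 /\ cc m = -2 * m + m ^+ 2 * P.
Proof.
rewrite ler_norml => /andP[m1 m2].
have [p0 p2] : 0 < (1 + m)^-1 /\ (1 + m)^-1 <= 2 by apply: inv_bnd; lra.
exists (2 * (1 + m)^-1); split.
  by rewrite ger0_norm; [lra | exact: mulr_ge0 (ltW p0)].
rewrite /cc; field; rewrite lt0r_neq0 //; lra.
Qed.

Lemma dd_dec m : `|m| <= 2^-1 -> exists P, `|P| <= 4 /\ dd m = 2^-1 * m + m ^+ 2 * P.
Proof.
rewrite ler_norml => /andP[m1 m2].
have [p0 p2] : 0 < (2 + m)^-1 /\ (2 + m)^-1 <= 2 by apply: inv_bnd; lra.
exists (- (2 + m)^-1 / 2); split.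
  rewrite normrM normrN ger0_norm ?(ltW p0) // ger0_norm ?invr_ge0 //; lra.
rewrite /dd; field; rewrite lt0r_neq0 //; lra.
Qed.

Lemma abs_mul_le (x y X Y : R) : `|x| <= X -> `|y| <= Y -> `|x * y| <= X * Y.
Proof. by move=> hx hy; rewrite normrM; apply: ler_pM => //; exact: normr_ge0. Qed.
Arguments abs_mul_le [x y X Y].

Lemma sq_abs_le (x r : R) : `|x| <= r -> `|x ^+ 2| <= r ^+ 2.
Proof. by move=> hx; rewrite expr2 expr2; exact: abs_mul_le. Qed.
Arguments sq_abs_le [x r].

Lemma phi_bnd (phi al P x rx : R) : phi = al * x + x ^+ 2 * P -> `|al| <= 2 -> `|P| <= 4 ->
  `|x| <= rx -> rx <= 2^-1 -> `|phi| <= 4 * rx.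
Proof.
move=> -> ha hP hx hr.
have h1 := abs_mul_le ha hx; have h2 := abs_mul_le (sq_abs_le hx) hP.
have := ler_normD (al * x) (x ^+ 2 * P).
have r0 : 0 <= rx by apply: le_trans (normr_ge0 _) hx.
nra.
Qed.
Arguments phi_bnd [phi al P x rx].

Definition KB (a b rx ry rl U Lc : R) :=
  4 * (rl ^+ 2 + `|a| * rx ^+ 2 + `|b| * ry ^+ 2) * U
  + 4 * `|a| * rx * (Lc * (rl + rx)) + 4 * `|b| * ry * (Lc * (rl + ry)).

Lemma key (pl px py al Pl Px Py a b x y l rx ry rl e1 e2 e3 e4 U Lc : R) :
  pl = al * l + l ^+ 2 * Pl -> px = al * x + x ^+ 2 * Px -> py = al * y + y ^+ 2 * Py ->
  `|al| <= 2 -> `|Pl| <= 4 -> `|Px| <= 4 -> `|Py| <= 4 ->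
  l = a * x + b * y -> `|x| <= rx -> `|y| <= ry -> `|l| <= rl ->
  rx <= 2^-1 -> ry <= 2^-1 ->
  `|e1| <= U -> `|e1 - e4| <= Lc * rl -> `|e2 - e4| <= Lc * rx -> `|e3 - e4| <= Lc * ry ->
  `|pl * e1 - a * (px * e2) - b * (py * e3)| <= KB a b rx ry rl U Lc.
Proof.
move=> Hl Hx Hy ha hPl hPx hPy Hlab hx hy hl hrx hry he1 h14 h24 h34.
have phx := phi_bnd Hx ha hPx hx hrx; have phy := phi_bnd Hy ha hPy hy hry.
have S : pl * e1 - a * (px * e2) - b * (py * e3) =
   (l ^+ 2 * Pl - a * (x ^+ 2 * Px) - b * (y ^+ 2 * Py)) * e1
   + a * (px * (e1 - e2)) + b * (py * (e1 - e3)).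
  by rewrite Hl Hx Hy Hlab; ring.
rewrite S.
have A1 := abs_mul_le (sq_abs_le hl) hPl.
have A2 := abs_mul_le (lexx `|a|) (abs_mul_le (sq_abs_le hx) hPx).
have A3 := abs_mul_le (lexx `|b|) (abs_mul_le (sq_abs_le hy) hPy).
have hA : `|l ^+ 2 * Pl - a * (x ^+ 2 * Px) - b * (y ^+ 2 * Py)|
    <= rl ^+ 2 * 4 + `|a| * (rx ^+ 2 * 4) + `|b| * (ry ^+ 2 * 4).
  have := ler_normB (l ^+ 2 * Pl - a * (x ^+ 2 * Px)) (b * (y ^+ 2 * Py)).
  have := ler_normB (l ^+ 2 * Pl) (a * (x ^+ 2 * Px)).
  lra.
have T1 := abs_mul_le hA he1.
have e12 : `|e1 - e2| <= Lc * (rl + rx).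
  have := ler_normB (e1 - e4) (e2 - e4).
  have -> : e1 - e4 - (e2 - e4) = e1 - e2 by ring.
  lra.
have e13 : `|e1 - e3| <= Lc * (rl + ry).
  have := ler_normB (e1 - e4) (e3 - e4).
  have -> : e1 - e4 - (e3 - e4) = e1 - e3 by ring.
  lra.
have T2 := abs_mul_le (lexx `|a|) (abs_mul_le phx e12).
have T3 := abs_mul_le (lexx `|b|) (abs_mul_le phy e13).
set X1 := (_ * e1) in T1 *; set X2 := a * _ in T2 *; set X3 := b * _ in T3 *.
have := ler_normD (X1 + X2) X3; have := ler_normD X1 X2.
rewrite /KB; lra.
Qed.
Arguments key [pl px py al Pl Px Py a b x y l rx ry rl e1 e2 e3 e4 U Lc].


Definition Lc (U : R) := C0 * (8 * h^-2 * U).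
Definition qb (U a b rx ry rl : R) := 2 * h^-2 * KB a b rx ry rl U (Lc U).

Lemma bnd_ge0 x r : bnd x r -> 0 <= r.
Proof.
move=> H; have : `|x 1%N 0| <= r by apply: H => //; apply/andP; split.
exact: le_trans (normr_ge0 _).
Qed.

Lemma inner_j i j : inner_node M N i j -> (0 < j < N)%N.
Proof. by case/andP. Qed.

Section WithU.
Variable U : R.
Hypothesis U0 : 0 <= U.
Hypothesis HU : forall lam, inWh N lam -> forall t, 0 <= t <= T ->
  forall a b, `|ext M N (u lam t) a b| <= U.

Lemma hh0 : 0 <= h^-2.
Proof. by rewrite invr_ge0 exprn_ge0 // ltW. Qed.

Lemma Lc_ge0 : 0 <= Lc U.
Proof. by rewrite /Lc mulr_ge0 ?C0_ge0 // mulr_ge0 // mulr_ge0 // hh0. Qed.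

Lemma lip lam r : inWh N lam -> bnd lam r -> forall T', 0 <= T' <= T ->
  forall a b, `|ext M N (u lam T') a b - ext M N (u z0 T') a b| <= Lc U * r.
Proof.
move=> lW lb T' /andP[T'0 T'T] a b.
have hh := hh0; have r0 := bnd_ge0 _ _ lb.
have L0 : 0 <= Lc U * r by rewrite mulr_ge0 // Lc_ge0.
rewrite /ext; case: ifP => inn; last by rewrite subrr normr0.
have gb0 : 0 <= 8 * h^-2 * U * r by rewrite !mulr_ge0.
have := @comb_bound 1 (-1) 0 lam z0 z0 T' (8 * h^-2 * U * r) lW inWh_z0 inWh_z0 T'0 T'T gb0 _ a b inn.
  rewrite /zc.
  have -> : 1 * u lam T' a b + -1 * u z0 T' a b + 0 * u z0 T' a b + - (1 + -1 + 0) * u z0 T' a b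
     = u lam T' a b - u z0 T' a b by ring.
  have -> : C0 * (8 * h^-2 * U * r) = Lc U * r by rewrite /Lc; ring.
apply => t i j t0 tT inn'.
rewrite /gcf !Dop_z0 Dop_eq; case: ifP => _; last by rewrite !mulr0 !addr0 oppr0 normr0.
have jN := inner_j _ _ inn'.
have mb := inWh_bnd _ lW j t jN (ltW t0).
have [Pc [hPc ec]] := cc_dec _ mb; have [Pd [hPd ed]] := dd_dec _ mb.
have a2 : `|(-2 : R)| <= 2 by rewrite normrN ger0_norm.
have a3 : `|(2^-1 : R)| <= 2 by rewrite ger0_norm ?invr_ge0 //; lra.
have hc := phi_bnd ec a2 hPc (lexx _) mb; have hd := phi_bnd ed a3 hPd (lexx _) mb.
have hr := lb j t jN (ltW t0).
have tT' : 0 <= t <= T by rewrite (ltW t0) /= (le_trans (ltW tT) T'T).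
have e1 := HU _ lW _ tT' 1%N j; have e2 := HU _ lW _ tT' 2%N j.
set m := lam j t in hc hd hr *.
set E1 := ext M N (u lam t) 1 j in e1 *; set E2 := ext M N (u lam t) 2 j in e2 *.
have -> : - (1 * (h^-2 * (cc m * E1 + dd m * E2)) + -1 * 0 + 0 * 0)
   = - (h^-2 * (cc m * E1 + dd m * E2)) by ring.
rewrite normrN normrM (ger0_norm hh).
have := abs_mul_le hc e1; have := abs_mul_le hd e2.
have := ler_normD (cc m * E1) (dd m * E2).
set X := `|cc m * E1 + dd m * E2|.
move=> H1 H2 H3.
have : X <= 8 * U * r.
  have hr2 : 0 <= r - `|m| by rewrite subr_ge0.
  have hU := mulr_ge0 hr2 U0; lra.
move=> HX.
have := ler_wpM2l hh HX. lra.
Qed.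


Lemma KB_ge0 a b rx ry rl : 0 <= rx -> 0 <= ry -> 0 <= rl -> 0 <= KB a b rx ry rl U (Lc U).
Proof.
move=> ? ? ?; have L0 := Lc_ge0; rewrite /KB.
repeat (apply: mulr_ge0 || apply: addr_ge0); rewrite ?normr_ge0 ?sqr_ge0 ?C0_ge0 ?hh0 //.
Qed.

Lemma qb_ge0 a b rx ry rl : 0 <= rx -> 0 <= ry -> 0 <= rl -> 0 <= qb U a b rx ry rl.
Proof.
by move=> ? ? ?; rewrite /qb mulr_ge0 ?KB_ge0 // mulr_ge0 // hh0.
Qed.

Lemma qest a b x y l rx ry rl : inWh N x -> inWh N y -> inWh N l ->
  (forall k t, l k t = a * x k t + b * y k t) ->
  bnd x rx -> bnd y ry -> bnd l rl -> rx <= 2^-1 -> ry <= 2^-1 ->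
  forall a' b', inner_node M N a' b' ->
  `|u l T a' b' - a * u x T a' b' - b * u y T a' b' - (1 - a - b) * u z0 T a' b'|
    <= C0 * qb U a b rx ry rl.
Proof.
move=> xW yW lW Hl bx byy bl rx2 ry2 a' b' inn.
have rx0 := bnd_ge0 _ _ bx; have ry0 := bnd_ge0 _ _ byy; have rl0 := bnd_ge0 _ _ bl.
have hh := hh0.
have q0 := @qb_ge0 a b rx ry rl rx0 ry0 rl0.
have := @comb_bound 1 (-a) (-b) l x y T (qb U a b rx ry rl) lW xW yW (ltW T0) (lexx T) q0 _ a' b' inn.
  rewrite /zc.
  have -> : 1 * u l T a' b' + - a * u x T a' b' + - b * u y T a' b' + - (1 + - a + - b) * u z0 T a' b'
     = u l T a' b' - a * u x T a' b' - b * u y T a' b' - (1 - a - b) * u z0 T a' b' by ring.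
apply => t i j t0 tT inn'.
rewrite /gcf !Dop_eq; case: ifP => _; last by rewrite !mulr0 !addr0 oppr0 normr0.
have jN := inner_j _ _ inn'.
have tT' : 0 <= t <= T by rewrite (ltW t0) /= (ltW tT).
have mx := inWh_bnd _ xW j t jN (ltW t0); have my := inWh_bnd _ yW j t jN (ltW t0).
have ml := inWh_bnd _ lW j t jN (ltW t0).
have [Pcl [hPcl ecl]] := cc_dec _ ml; have [Pdl [hPdl edl]] := dd_dec _ ml.
have [Pcx [hPcx ecx]] := cc_dec _ mx; have [Pdx [hPdx edx]] := dd_dec _ mx.
have [Pcy [hPcy ecy]] := cc_dec _ my; have [Pdy [hPdy edy]] := dd_dec _ my.
have a2 : `|(-2 : R)| <= 2 by rewrite normrN ger0_norm.
have a3 : `|(2^-1 : R)| <= 2 by rewrite ger0_norm ?invr_ge0 //; lra.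
have hx := bx j t jN (ltW t0); have hy := byy j t jN (ltW t0); have hl := bl j t jN (ltW t0).
have Hlj := Hl j t.
have S1 := key ecl ecx ecy a2 hPcl hPcx hPcy Hlj hx hy hl rx2 ry2
  (HU _ lW _ tT' 1%N j) (lip _ _ lW bl _ tT' 1%N j) (lip _ _ xW bx _ tT' 1%N j) (lip _ _ yW byy _ tT' 1%N j).
have S2 := key edl edx edy a3 hPdl hPdx hPdy Hlj hx hy hl rx2 ry2
  (HU _ lW _ tT' 2%N j) (lip _ _ lW bl _ tT' 2%N j) (lip _ _ xW bx _ tT' 2%N j) (lip _ _ yW byy _ tT' 2%N j).
set K := KB a b rx ry rl U (Lc U) in S1 S2 *.
set X1 := (cc (l j t) * _ - _ - _) in S1.
set X2 := (dd (l j t) * _ - _ - _) in S2.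
have -> : - (1 * (h^-2 * (cc (l j t) * ext M N (u l t) 1 j + dd (l j t) * ext M N (u l t) 2 j))
     + - a * (h^-2 * (cc (x j t) * ext M N (u x t) 1 j + dd (x j t) * ext M N (u x t) 2 j))
     + - b * (h^-2 * (cc (y j t) * ext M N (u y t) 1 j + dd (y j t) * ext M N (u y t) 2 j)))
   = - (h^-2 * (X1 + X2)) by rewrite /X1 /X2; ring.
rewrite normrN normrM (ger0_norm hh) /qb -/K.
have := ler_normD X1 X2; set Y := `|X1 + X2| => HY.
have : Y <= 2 * K by lra.
move=> HY2; have := ler_wpM2l hh HY2; lra.
Qed.

End WithU.

Local Notation w := (@w R).

Definition sc (n : nat) (x : fn) : fn := lc (w n) 0 x x.
Definition Ad (n : nat) (x : fn) i j := 2 ^+ n * (u (sc n x) T i j - u z0 T i j).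
Definition Ld (x : fn) i j : R := limn (fun n => Ad n x i j).

Lemma qb_hom U a b s rx ry rl : qb U a b (s * rx) (s * ry) (s * rl) = s ^+ 2 * qb U a b rx ry rl.
Proof. by rewrite /qb /KB; ring. Qed.

Lemma sc_facts x n : admissible N x -> 2 * lamnorm N x < 2 ^+ n ->
  [/\ inWh N (sc n x), bnd (sc n x) (w n * lamnorm N x) & w n * lamnorm N x < 2^-1].
Proof.
move=> ax hn; set px := lamnorm N x in hn *.
have px0 : 0 <= px := lamnorm_ge0 _ ax.
have wn := w_gt0 R n; have pw := pw R n.
have bs : bnd (sc n x) (w n * px).
  move=> j t jN t0; rewrite /sc /lc mul0r addr0 normrM ger0_norm ?(ltW wn) //.
  apply: ler_wpM2l; first exact: ltW wn.
  exact: lamnorm_ub.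
have sm : w n * px < 2^-1.
  move: pw hn; set P := 2 ^+ n; set W := w n in wn * => pw hn.
  have : 0 < (P - 2 * px) * W by apply: mulr_gt0 => //; lra.
  lra.
split => //; split; first exact: adm_lc.
exact: le_lt_trans (lamnorm_le _ _ bs) sm.
Qed.

Section Fin.
Variable U : R.
Hypothesis U0 : 0 <= U.
Hypothesis HU : forall lam, inWh N lam -> forall t, 0 <= t <= T ->
  forall a b, `|ext M N (u lam t) a b| <= U.

Definition Kx (x : fn) := C0 * qb U 1 1 (lamnorm N x) (lamnorm N x) (2 * lamnorm N x).

Lemma Kx_ge0 x : admissible N x -> 0 <= Kx x.
Proof.
move=> ax; have p0 := lamnorm_ge0 _ ax.
by rewrite /Kx mulr_ge0 ?C0_ge0 // qb_ge0 // mulr_ge0.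
Qed.

Lemma step x i j n : admissible N x -> inner_node M N i j -> 2 * lamnorm N x < 2 ^+ n ->
  `|Ad n.+1 x i j - Ad n x i j| <= Kx x * w n.
Proof.
move=> ax inn hn; set px := lamnorm N x in hn *.
have hn1 : 2 * px < 2 ^+ n.+1 by apply: lt_le_trans hn (@pow2_mono R _ _ (leqnSn n)).
have [W0 B0 S0] := sc_facts _ _ ax hn; have [W1 B1 S1] := sc_facts _ _ ax hn1.
have Hl : forall k t, sc n x k t = 1 * sc n.+1 x k t + 1 * sc n.+1 x k t.
  by move=> k t; rewrite /sc /lc wS; field.
have q := @qest U U0 HU 1 1 _ _ _ _ _ _ W1 W1 W0 Hl B1 B1 B0 (ltW S1) (ltW S1) i j inn.
rewrite /Ad.
have -> : 2 ^+ n.+1 * (u (sc n.+1 x) T i j - u z0 T i j) - 2 ^+ n * (u (sc n x) T i j - u z0 T i j)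
   = - (2 ^+ n * (u (sc n x) T i j - 1 * u (sc n.+1 x) T i j - 1 * u (sc n.+1 x) T i j
        - (1 - 1 - 1) * u z0 T i j)) by rewrite exprS; ring.
have p0 : 0 <= (2 : R) ^+ n by rewrite exprn_ge0.
rewrite normrN normrM (ger0_norm p0).
apply: le_trans (ler_wpM2l p0 q) _.
have -> : w n * px = w n.+1 * (2 * px) by rewrite wS; field.
rewrite qb_hom.
have E : 2 ^+ n * (C0 * (w n.+1 ^+ 2 * qb U 1 1 px px (2 * px))) = Kx x * w n / 4.
  rewrite wS /Kx -/px.
  transitivity ((2 ^+ n * w n) * (C0 * qb U 1 1 px px (2 * px) * w n) / 4); first by field.
  by rewrite (pw R n) mul1r.
rewrite E; have := mulr_ge0 (Kx_ge0 _ ax) (ltW (w_gt0 R n)); lra.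
Qed.

Lemma conv x i j n : admissible N x -> inner_node M N i j -> 2 * lamnorm N x < 2 ^+ n ->
  `|Ld x i j - Ad n x i j| <= 2 * Kx x * w n.
Proof.
move=> ax inn hn; rewrite /Ld.
apply: (@geo_lim R (fun m => Ad m x i j) (Kx x) n) => // m nm.
by apply: step => //; apply: lt_le_trans hn (@pow2_mono R _ _ nm).
Qed.

End Fin.

Lemma Zw_le (Z e : R) n : 0 < e -> Z / e < 2 ^+ n -> Z * w n <= e.
Proof.
move=> e0; rewrite ltr_pdivrMr // => hZ.
have wn := w_gt0 R n.
have := ler_wpM2r (ltW wn) (ltW hZ).
by rewrite -mulrA (mulrC e) mulrA (pw R n) mul1r.
Qed.

Lemma main_res : frechet_diff_at0 M N (fun lam => u lam T).
Proof.
have [U [U0 HU]] := U_ex.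
have c0 := C0_ge0.
exists Ld; split; [|split].
- move=> a b x y ax ay i j inn.
  have al : admissible N (lc a b x y) := adm_lc a b x y ax ay.
  rewrite -/(lc a b x y).
  set l := lc a b x y in al *.
  set px := lamnorm N x; set py := lamnorm N y; set pl := lamnorm N l.
  have px0 : 0 <= px := lamnorm_ge0 _ ax; have py0 : 0 <= py := lamnorm_ge0 _ ay.
  have pl0 : 0 <= pl := lamnorm_ge0 _ al.
  have Kx0 : 0 <= Kx U _ := Kx_ge0 U U0 _ ax; have Ky0 : 0 <= Kx U _ := Kx_ge0 U U0 _ ay.
  have Kl0 : 0 <= Kx U _ := Kx_ge0 U U0 _ al.
  have q0 : 0 <= qb U a b px py pl by apply: qb_ge0.
  set Z := 2 * Kx U l + `|a| * (2 * Kx U x) + `|b| * (2 * Kx U y) + C0 * qb U a b px py pl.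
  have Z0 : 0 <= Z by rewrite /Z; have := mulr_ge0 c0 q0; have := normr_ge0 a;
    have := normr_ge0 b; nra.
  apply/eqP; rewrite -subr_eq0 -normr_le0; apply/ler_addgt0Pr => e e0; rewrite add0r.
  have Ze0 : 0 <= Z / e by apply: divr_ge0 => //; exact: ltW.
  have [n [_ hn]] := @pow2_large R (2 * px + 2 * py + 2 * pl + Z / e) 0.
  have hx : 2 * px < 2 ^+ n by lra.
  have hy : 2 * py < 2 ^+ n by lra.
  have hl : 2 * pl < 2 ^+ n by lra.
  have hZ : Z / e < 2 ^+ n by lra.
  have cx := @conv U U0 HU _ i j n ax inn hx; have cy := @conv U U0 HU _ i j n ay inn hy.
  have cl := @conv U U0 HU _ i j n al inn hl.
  have [Wx Bx Sx] := sc_facts _ _ ax hx; have [Wy By Sy] := sc_facts _ _ ay hy.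
  have [Wl Bl Sl] := sc_facts _ _ al hl.
  have Hl : forall k t, sc n l k t = a * sc n x k t + b * sc n y k t.
    by move=> k t; rewrite /sc /l /lc; ring.
  have q := @qest U U0 HU a b _ _ _ _ _ _ Wx Wy Wl Hl Bx By Bl (ltW Sx) (ltW Sy) i j inn.
  rewrite qb_hom in q.
  have wn := w_gt0 R n; have pwn := pw R n.
  have p0 : 0 <= (2 : R) ^+ n by rewrite exprn_ge0.
  have hA : `|Ad n l i j - a * Ad n x i j - b * Ad n y i j| <= C0 * qb U a b px py pl * w n.
    have -> : Ad n l i j - a * Ad n x i j - b * Ad n y i j =
      2 ^+ n * (u (sc n l) T i j - a * u (sc n x) T i j - b * u (sc n y) T i j
                - (1 - a - b) * u z0 T i j) by rewrite /Ad; ring.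
    rewrite normrM (ger0_norm p0).
    apply: le_trans (ler_wpM2l p0 q) _.
    have -> : 2 ^+ n * (C0 * (w n ^+ 2 * qb U a b px py pl))
       = (2 ^+ n * w n) * (C0 * qb U a b px py pl * w n) by ring.
    by rewrite pwn mul1r.
  have Zw := @Zw_le _ _ n e0 hZ.
  set Ll := Ld l i j in cl *; set Lx := Ld x i j in cx *; set Ly := Ld y i j in cy *.
  set Al := Ad n l i j in cl hA *; set Ax := Ad n x i j in cx hA *.
  set Ay := Ad n y i j in cy hA *.
  have ax' := abs_mul_le (lexx `|a|) cx; have ay' := abs_mul_le (lexx `|b|) cy.
  have -> : Ll - (a * Lx + b * Ly) =
     (Ll - Al) - a * (Lx - Ax) - b * (Ly - Ay) + (Al - a * Ax - b * Ay) by ring.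
  have t1 := ler_normD ((Ll - Al) - a * (Lx - Ax) - b * (Ly - Ay)) (Al - a * Ax - b * Ay).
  have t2 := ler_normB ((Ll - Al) - a * (Lx - Ax)) (b * (Ly - Ay)).
  have t3 := ler_normB (Ll - Al) (a * (Lx - Ax)).
  apply: le_trans Zw; rewrite /Z.
  lra.
- exists (Lc U) => x ax i j inn.
  set px := lamnorm N x.
  have px0 : 0 <= px := lamnorm_ge0 _ ax.
  have Kx0 : 0 <= Kx U _ := Kx_ge0 U U0 _ ax.
  apply/ler_addgt0Pr => e e0.
  have Ze0 : 0 <= 2 * Kx U x / e by apply: divr_ge0 => //; [lra | exact: ltW].
  have [n [_ hn]] := @pow2_large R (2 * px + 2 * Kx U x / e) 0.
  have hx : 2 * px < 2 ^+ n by lra.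
  have hZ : 2 * Kx U x / e < 2 ^+ n by lra.
  have cx := @conv U U0 HU _ i j n ax inn hx.
  have [Wx Bx Sx] := sc_facts _ _ ax hx.
  have T0' : 0 <= T <= T by rewrite lexx (ltW T0).
  have li := @lip U U0 HU _ _ Wx Bx T T0' i j; rewrite /ext inn in li.
  have wn := w_gt0 R n; have pwn := pw R n.
  have p0 : 0 <= (2 : R) ^+ n by rewrite exprn_ge0.
  have hA : `|Ad n x i j| <= Lc U * px.
    rewrite /Ad normrM (ger0_norm p0).
    apply: le_trans (ler_wpM2l p0 li) _.
    have -> : 2 ^+ n * (Lc U * (w n * px)) = (2 ^+ n * w n) * (Lc U * px) by ring.
    by rewrite pwn mul1r.
  have Zw := @Zw_le _ _ n e0 hZ.
  have t := ler_normD (Ld x i j - Ad n x i j) (Ad n x i j); rewrite subrK in t.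
  have : 2 * Kx U x * w n <= e by lra.
  lra.
- move=> eps eps0.
  set qb1 := qb U 1 1 1 1 2.
  have q10 : 0 <= C0 * qb1 by rewrite mulr_ge0 // qb_ge0.
  exists (eps / (2 * (C0 * qb1) + 1)); split; first by apply: divr_gt0 => //; lra.
  move=> x [ax xs] xd i j inn /=.
  set px := lamnorm N x in xs xd *.
  have px0 : 0 <= px := lamnorm_ge0 _ ax.
  have hn : 2 * px < 2 ^+ 0 by rewrite expr0; lra.
  have cx := @conv U U0 HU _ i j 0 ax inn hn.
  have e1 : Kx U x = px ^+ 2 * (C0 * qb1) by rewrite /Kx -/px /qb1 /qb /KB; ring.
  rewrite e1 w0 /Ld /Ad expr0 mul1r in cx.
  have esc : sc 0 x = x.
    by apply/funext => k; apply/funext => t; rewrite /sc /lc w0; ring.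
  rewrite esc in cx.
  rewrite /z0 in cx.
  move: xd; rewrite ltr_pdivlMr; last by lra.
  move=> xd.
  rewrite distrC.
  apply: le_trans cx _.
  have := mulr_ge0 px0 q10; nra.
Qed.

End Main.

Theorem theorem2p14 (R : realType) (h : R) (M N : nat) (T : R)
  (F : R -> nat -> nat -> R) (u0 : nat -> nat -> R)
  (u : (nat -> R -> R) -> R -> nat -> nat -> R) :
  0 < h -> (2 <= M)%N -> (2 <= N)%N -> 0 < T ->
  (forall i j, inner_node M N i j ->
     cont_on_Rplus (fun t => F t i j)) ->
  (forall lam, inWh N lam -> is_solution h M N F u0 lam (u lam)) ->
  frechet_diff_at0 M N (fun lam => u lam T).
Proof.
move=> h0 _ N2 T0 Fc usol.
exact: (@main_res R h M N T F u0 u h0 N2 T0 Fc usol).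
Qed.
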